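(* Let $G$ be a finite group of odd order. (1) If $G'\cong C_{15}$, then $G'\subseteq Z(G)$. (2) If $G'\cong C_{21}$ and $G'\not\subseteq Z(G)$, then $|G/C_G(G')|=|G'\cap Z(G)|=3$, and exactly one of the following holds: (i) $|\mathrm{Cl}_G(x)|=21$ for all $x\in G\setminus C_G(G')$; (ii) there is a subset $X\subseteq G\setminus C_G(G')$ with $|X|=2|Z(C_G(G'))|$ such that $|\mathrm{Cl}_G(x)|=7$ for $x\in X$ and $|\mathrm{Cl}_G(x)|=21$ for $x\in G\setminus (C_G(G')\cup X)$.
   Context: $G'$ is the commutator subgroup, $Z(\cdot)$ the center, $C_G(G')$ the centralizer of $G'$ in $G$, $\mathrm{Cl}_G(x)$ the conjugacy class of $x$, and $C_n$ the cyclic group of order $n$. *)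

(* Defs.v *)
From mathcomp Require Import all_boot.

(* Main.v *)
Require Import Defs.
From mathcomp Require Import all_boot fingroup morphism quotient commutator center cyclic.
From mathcomp Require Import automorphism.
Import GroupScope.
Lemma decomp3 {gT : finGroupType} {G C : {group gT}} {x : gT} :
  C <| G -> #|G / C| = 3 -> x \in G -> x \notin C ->
  x ^+ 3 \in C /\ (forall g, g \in G -> exists2 k, k < 3 & exists2 c, c \in C & g = x ^+ k * c).
Proof.
move=> nCG oQ Gx Cx; have nC := normal_norm nCG.
have Nx : x \in 'N(C) := subsetP nC x Gx.
have Qx : coset C x \in G / C by apply: mem_quotient.
have ox : #[coset C x] = 3.
  have : #[coset C x] %| 3 by rewrite -oQ order_dvdG.
  have [o1|n1] := eqVneq #[coset C x] 1%N; last by move/(prime_nt_dvdP _ n1); apply.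
  move/eqP: o1; rewrite order_eq1 => /eqP/coset_idr => /(_ Nx) H.
  by rewrite H in Cx.
have x3 : x ^+ 3 \in C.
  apply: coset_idr; first by rewrite groupX.
  by rewrite morphX // -ox expg_order.
split=> // g Gg.
have Ng : g \in 'N(C) := subsetP nC g Gg.
have Qg : coset C g \in G / C by apply: mem_quotient.
have eqQ : <[coset C x]> = G / C.
  apply/eqP; rewrite eqEcard cycle_subG Qx /= oQ -orderE ox leqnn //.
move: Qg; rewrite -eqQ => /cycleP [k ek].
exists (k %% 3); first by rewrite ltn_mod.
exists ((x ^+ (k %% 3))^-1 * g); last by rewrite mulKVg.
apply: coset_idr; first by rewrite groupM ?groupV ?groupX.
rewrite morphM ?groupV ?groupX // morphV ?groupX // morphX //.
idtac.
change (coset C x ^- (k %% 3) * coset C g = 1).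
by rewrite ek -ox expg_mod_order mulVg.
Qed.

Lemma class_C {gT : finGroupType} {G C : {group gT}} {x : gT} :
  C <| G -> #|G / C| = 3 -> x \in G -> x \notin C ->
  x ^: G = x ^: C.
Proof.
move=> nCG oQ Gx Cx; have [_ dec] := decomp3 nCG oQ Gx Cx.
apply/eqP; rewrite eqEsubset; apply/andP; split; last first.
  by apply: imsetS; apply: normal_sub.
apply/subsetP=> _ /imsetP [g Gg ->].
have [k _ [c Cc ->]] := dec g Gg.
rewrite conjgM; have -> : x ^ (x ^+ k) = x.
  by apply/conjg_fixP; apply/commgP; apply: commuteX.
exact: imset_f.
Qed.

Lemma class_card {gT : finGroupType} {G C : {group gT}} {x : gT} :
  C <| G -> #|G / C| = 3 -> x \in G -> x \notin C ->
  #|x ^: G| = #|[set [~ x, c] | c in C]|.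
Proof.
move=> nCG oQ Gx Cx; rewrite (class_C nCG oQ Gx Cx).
rewrite -[RHS](card_imset _ (mulgI x)) -imset_comp.
have -> : x ^: C = (mulg x \o commg x) @: C.
  by rewrite /class; apply: eq_imset => c /=; rewrite conjg_mulR.
by [].
Qed.

Lemma quo_cent_dvd {gT : finGroupType} {G H : {group gT}} : G \subset 'N(H) -> cyclic H ->
  #|G / 'C_G(H)| %| totient #|H|.
Proof.
move=> nHG cycH.
rewrite -ker_conj_aut (card_isog (first_isog_loc _ _)) //.
apply: dvdn_trans (cardSg (Aut_conj_aut _ _)) _.
by rewrite card_Aut_cyclic.
Qed.

Lemma quo_cent_dvdG {gT : finGroupType} {G H : {group gT}} : G \subset 'N(H) -> #|G / 'C_G(H)| %| #|G|.
Proof.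
move=> nHG; rewrite card_quotient; first exact: dvdn_indexg.
by rewrite normsI ?normG // norms_cent.
Qed.

Lemma small_div (q m : nat) : q %| m -> 0 < m -> (q <= m) /\ (0 < q).
Proof. move=> dq m0; split; [exact: dvdn_leq | exact: dvdn_gt0 dq]. Qed.

Lemma cent_trivial {gT : finGroupType} {G H : {group gT}} :
  G \subset 'N(H) -> #|G / 'C_G(H)| = 1%N -> G \subset 'C(H).
Proof.
move=> nHG o1.
have nC : G \subset 'N('C_G(H)) by rewrite normsI ?normG // norms_cent.
have : G / 'C_G(H) \subset [1].
  by move/eqP: o1; rewrite -trivg_card1 => /eqP ->.
by rewrite quotient_sub1 // subsetI => /andP[].
Qed.

Lemma part1 {gT : finGroupType} (G : {group gT}) :
  odd #|G| -> cyclic (G^`(1)) -> #|G^`(1)| = 15 -> G^`(1) \subset 'Z(G).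
Proof.
move=> oddG cycD oD.
have nDG := der_norm 1 G.
have d1 := quo_cent_dvd nDG cycD.
rewrite oD in d1.
have d2 := quo_cent_dvdG (H := G^`(1)) nDG.
have oq := dvdn_odd d2 oddG.
have q1 : #|G / 'C_G(G^`(1))| = 1%N.
  have t15 : totient 15 = 8 by [].
  rewrite t15 in d1.
  have le8 := dvdn_leq (isT : 0 < 8) d1.
  move: le8 d1 oq; case: #|_| => [|[|[|[|[|[|[|[|[|q]]]]]]]]] //.
have cGD := cent_trivial nDG q1.
by rewrite subsetI der_sub centsC.
Qed.

Lemma part2 {gT : finGroupType} (G D : {group gT}) :
  odd #|G| -> D <| G -> (forall a b, a \in G -> b \in G -> [~ a, b] \in D) ->
  cyclic D -> #|D| = 21 -> ~~ (D \subset 'Z(G)) ->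
    [/\ #|G / 'C_G(D)| = 3,
        #|D :&: 'Z(G)| = 3 &
        let C := 'C_G(D) in
        let P1 := forall x, x \in G :\: C -> #|x ^: G| = 21 in
        let P2 := exists X : {set gT},
            [/\ X \subset G :\: C,
                #|X| = (2 * #|'Z(C)|)%N,
                forall x, x \in X -> #|x ^: G| = 7 &
                forall x, x \in G :\: (C :|: X) -> #|x ^: G| = 21] in
        (P1 /\ ~ P2) \/ (~ P1 /\ P2)].
Proof.
move=> oddG nDG commD cycD oD nZ.
have sDG := normal_sub nDG; have nD := normal_norm nDG.
have abD := cyclic_abelian cycD.
have [C defC] : {C : {group gT} | C :=: 'C_G(D)} by exists 'C_G(D)%G.
rewrite -defC.
have nCG : C <| G.
  by rewrite defC /normal subsetIl normsI ?normG ?norms_cent.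
have sCG := normal_sub nCG.
have cCD : C \subset 'C(D) by rewrite defC subsetIr.
have sDC : D \subset C by rewrite defC subsetI sDG.
have oQ : #|G / C| = 3.
  have d1 := quo_cent_dvd nD cycD; rewrite oD -defC in d1.
  have d2 := quo_cent_dvdG (H := D) nD; rewrite -defC in d2.
  have oq := dvdn_odd d2 oddG.
  have t21 : totient 21 = 12 by [].
  rewrite t21 in d1.
  have le := dvdn_leq (isT : 0 < 12) d1.
  move: le d1 oq; case E: #|_| => [|[|[|[|[|[|[|[|[|[|[|[|[|q]]]]]]]]]]]]] //.
  move=> _ _ _; have := cent_trivial nD; rewrite -defC => /(_ E) cGD.
  by case/negP: nZ; rewrite subsetI sDG centsC.
have [y defy] := cyclicP cycD.
have oy : #[y] = 21 by rewrite orderE -defy.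
have Dy : y \in D by rewrite defy cycle_id.
set t := y ^+ 7.
have ot : #[t] = 3 by rewrite orderXdiv oy.
have Dt : t \in D by rewrite groupX.
have ntG : <[t]> <| G.
  apply: char_normal_trans nDG; rewrite sub_cyclic_char // cycle_subG //.
have tZ : t \in 'Z(G).
  have nT := normal_norm ntG.
  have d1 := quo_cent_dvd nT (cycle_cyclic t).
  have d2 := quo_cent_dvdG (H := <[t]>) nT.
  have oq := dvdn_odd d2 oddG.
  rewrite -orderE ot in d1.
  have q1 : #|G / 'C_G(<[t]>)| = 1%N.
    have le := dvdn_leq (isT : 0 < 2) d1.
    move: le d1 oq; case: #|_| => [|[|[|q]]] //.
  have := cent_trivial nT q1; rewrite centsC cycle_subG => cGt.
  by rewrite inE (subsetP sDG) // cGt.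
have oDZ : #|D :&: 'Z(G)| = 3.
  have d3 : 3 %| #|D :&: 'Z(G)|.
    rewrite -ot orderE; apply: cardSg; by rewrite cycle_subG inE Dt.
  have d21 : #|D :&: 'Z(G)| %| 21 by rewrite -oD cardSg // subsetIl.
  have n21 : #|D :&: 'Z(G)| != 21.
    apply/negP=> /eqP e; case/negP: nZ.
    have : D :&: 'Z(G) = D by apply/eqP; rewrite eqEcard subsetIl oD e /=.
    by move=> <-; rewrite subsetIr.
  have le := dvdn_leq (isT : 0 < 21) d21.
  move: le d21 d3 n21; case: #|_| => [|[|[|[|[|[|[|[|[|[|[|[|[|[|[|[|[|[|[|[|[|[|q]]]]]]]]]]]]]]]]]]]]]] //.
split=> //.
have comD : forall u v, u \in D -> v \in D -> commute u v.
  by move=> u v Du Dv; apply: (centP (subsetP abD u Du)).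
have comCD : forall c u, c \in C -> u \in D -> commute c u.
  by move=> c u Cc Du; apply: (centP (subsetP cCD c Cc)).
have conjfix : forall z d : gT, commute z d -> z ^ d = z.
  by move=> z d czd; rewrite conjgE czd mulKg.
have hom : forall x, x \in G -> {in C &, {morph commg x : c d / c * d}}.
  move=> x Gx c d Cc Cd /=.
  have Dc := commD x c Gx (subsetP sCG c Cc).
  have Dd := commD x d Gx (subsetP sCG d Cd).
  rewrite commgMJ conjfix; first by apply: comD.
  by apply/commute_sym/comCD.
have classS : forall x (xG : x \in G), x \notin C ->
    #|x ^: G| = #|Morphism (hom x xG) @* C|.
  move=> x xG xC; rewrite morphimEdom (class_card nCG oQ xG xC) //.
have tcom : forall g, g \in G -> commute t g.
  by move=> g Gg; case/centerP: tZ => _; apply.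
have cls : forall x, x \in G -> x \notin C ->
    (#|x ^: G| = 7 \/ #|x ^: G| = 21) /\
    (#|x ^: G| = 7 <-> forall c, c \in C -> [~ x, c] ^+ 7 = 1).
  move=> x xG xC; rewrite (classS x xG xC).
  set f := Morphism (hom x xG).
  have fE : forall c, f c = [~ x, c] by [].
  have sSD : f @* C \subset D.
    by rewrite morphimEdom; apply/subsetP => _ /imsetP[c Cc ->]; rewrite fE commD // (subsetP sCG).
  have dS : #|f @* C| %| 21 by rewrite -oD cardSg.
  have Cy : y \in C := subsetP sDC y Dy.
  have yS : [~ x, y] \in f @* C by rewrite -fE mem_morphim.
  have z7 : [~ x, y] ^+ 7 = 1.
    rewrite -fE -morphX // fE; apply/eqP/commgP; apply: commute_sym; exact: tcom.
  have n3 : ~~ (#|f @* C| %| 3).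
    apply/negP=> d3.
    have o3 : #[[~ x, y]] %| 3 := dvdn_trans (order_dvdG yS) d3.
    have o7 : #[[~ x, y]] %| 7 by rewrite order_dvdn z7.
    have : #[[~ x, y]] %| gcdn 3 7 by rewrite dvdn_gcd o3 o7.
    rewrite order_dvdn expg1 => /commgP cxy.
    case/negP: xC; rewrite defC inE xG defy cent_cycle; exact/cent1P.
  have S721 : #|f @* C| = 7 \/ #|f @* C| = 21.
    have le := dvdn_leq (isT : 0 < 21) dS.
    move: le dS n3; case: #|_| => [|[|[|[|[|[|[|[|[|[|[|[|[|[|[|[|[|[|[|[|[|[|q]]]]]]]]]]]]]]]]]]]]]] //; auto.
  split=> //; split.
    move=> o7 c Cc; apply/eqP; rewrite -order_dvdn -o7 order_dvdG //.
    by rewrite -fE mem_morphim.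
  move=> all7; case: S721 => // o21.
  have eSD : f @* C = D by apply/eqP; rewrite eqEcard sSD oD o21 /=.
  have : y ^+ 7 == 1.
    move: Dy; rewrite -eSD morphimEdom => /imsetP [c Cc ->].
    by apply/eqP; apply: all7.
  by rewrite -order_dvdn oy.
have centZ : forall x z, x \in G -> x \notin C -> z \in D -> commute z x -> z \in 'Z(G).
  move=> x z xG xC Dz czx; apply/centerP; split; first exact: (subsetP sDG).
  move=> g Gg; have [k _ [c Cc ->]] := (decomp3 nCG oQ xG xC).2 g Gg.
  apply: commuteM; first exact: commuteX.
  by apply/commute_sym/comCD.
have [x0 Gx0 Cx0] : exists2 x0, x0 \in G & x0 \notin C.
  apply/subsetPn; apply/negP=> sGC.
  by move: oQ; rewrite quotientS1 // cards1.
have c1 : forall a b : gT, commute a b -> [~ a, b] = 1.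
  by move=> a b cab; apply/eqP/commgP.
have comm3 : forall d c, d \in C -> c \in C -> [~ d, c] ^+ 3 = 1.
  move=> d c Cd Cc.
  have Gd := subsetP sCG d Cd; have Gc := subsetP sCG c Cc.
  have Dz : [~ d, c] \in D by apply: commD.
  have Du : [~ d, x0] \in D by apply: commD.
  have Dv : [~ c, x0] \in D by apply: commD.
  have zx : [~ d, c] ^ x0 = [~ d, c].
    rewrite conjRg !conjg_mulR commMgJ (c1 [~ d, x0]); last first.
      apply: commuteM; [by apply/commute_sym/comCD | exact: comD].
    rewrite mulg1 conjfix; last first.
      apply: comD => //; apply: commD => //; rewrite groupM // (subsetP sDG) //.
    rewrite commgMJ c1; last by apply: comCD.
    by rewrite mul1g conjfix //; apply: comD.
  have zZ : [~ d, c] \in 'Z(G).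
    apply: (centZ x0) => //; apply/commgP; apply/eqP.
    by rewrite commgEl zx mulVg.
  apply/eqP; rewrite -order_dvdn -oDZ; apply: order_dvdG.
  by rewrite inE Dz zZ.
have pw7 : forall w : gT, w ^+ 3 = 1 -> w ^+ 7 = w.
  by move=> w w3; rewrite (_ : 7 = 3 * 2 + 1)%N // expgD expgM w3 expg1n mul1g expg1.
have Qshift : forall x' d, x' \in G -> (forall c, c \in C -> [~ x', c] ^+ 7 = 1) ->
    d \in C -> ((forall c, c \in C -> [~ x' * d, c] ^+ 7 = 1) <-> d \in 'Z(C)).
  move=> x' d Gx' Qx' Cd.
  have key : forall c, c \in C -> [~ x' * d, c] ^+ 7 = [~ d, c].
    move=> c Cc; have Gc := subsetP sCG c Cc; have Gd := subsetP sCG d Cd.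
    have D1 : [~ x', c] \in D by apply: commD.
    have D2 : [~ d, c] \in D by apply: commD.
    rewrite commMgJ conjfix; last by apply/commute_sym/comCD.
    by rewrite expgMn ?Qx' ?mul1g ?pw7 ?comm3 //; apply: comD.
  split.
    move=> H; apply/centerP; split=> // c Cc.
    by apply/commgP; apply/eqP; rewrite -key // H.
  case/centerP=> _ cd c Cc; rewrite key //; exact: c1 (cd c Cc).
have Q2 : forall x, x \in G -> (forall c, c \in C -> [~ x, c] ^+ 7 = 1) ->
    (forall c, c \in C -> [~ x ^+ 2, c] ^+ 7 = 1).
  move=> x Gx Qx c Cc; rewrite expg2 commMgJ.
  have D1 : [~ x, c] \in D by apply: commD => //; apply: (subsetP sCG).
  have D1x : [~ x, c] ^ x \in D by rewrite memJ_norm // (subsetP nD).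
  by rewrite expgMn ?Qx // ?mulg1 -?conjXg ?Qx ?conj1g //; apply: comD.
case: (boolP [forall (x | x \in G :\: C), #|x ^: G| == 21]) => [allP | /forallPn [x1]].
  left; split.
    by move=> x xGC; apply/eqP; move/forallP: allP => /(_ x); rewrite xGC.
  case=> X [sX cX X7 _].
  have : (0 < #|X|)%N by rewrite cX muln_gt0 cardG_gt0.
  case/card_gt0P=> x Xx; move/forallP: allP => /(_ x); rewrite (subsetP sX) //=.
  by rewrite X7.
rewrite negb_imply => /andP [x1GC n21].
have [x1C x1G] : x1 \notin C /\ x1 \in G by move: x1GC; rewrite inE => /andP[].
have [[o7|o21] cQ1] := cls x1 x1G x1C; last by rewrite o21 in n21.
have Qx1 := (cQ1.1 o7).
right; split.
  by move=> P1; move: n21; rewrite P1.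
have [x13 dec1] := decomp3 nCG oQ x1G x1C.
set x2 := x1 ^+ 2.
have x2G : x2 \in G by rewrite groupX.
have x2C : x2 \notin C.
  apply/negP=> Cx2; case/negP: x1C.
  have -> : x1 = x2^-1 * x1 ^+ 3 by rewrite expgSr mulKg.
  by rewrite groupM ?groupV.
have Qx2 := Q2 x1 x1G Qx1.
have sZC : 'Z(C) \subset C := center_sub C.
pose X := [set g in G :\: C | #|g ^: G| == 7].
have memX : forall g, (g \in X) = (g \in x1 *: 'Z(C)) || (g \in x2 *: 'Z(C)).
  move=> g; rewrite !mem_lcoset inE; apply/idP/idP.
    case/andP=> gGC /eqP g7; have [gC gG] : g \notin C /\ g \in G.
      by move: gGC; rewrite inE => /andP[].
    have Qg := ((cls g gG gC).2.1 g7).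
    have [k lk [d Cd eg]] := dec1 g gG.
    move: lk eg; case: k => [|[|[|//]]] _ eg.
    - by case/negP: gC; rewrite eg mul1g.
    - rewrite eg expg1 mulKg; apply/orP; left.
      by apply/(Qshift x1 d x1G Qx1 Cd); rewrite -[x1]expg1 -eg.
    - rewrite eg mulKg; apply/orP; right.
      by apply/(Qshift x2 d x2G Qx2 Cd); rewrite -eg.
  have gen : forall x', x' \in G -> x' \notin C -> (forall c, c \in C -> [~ x', c] ^+ 7 = 1) ->
      x'^-1 * g \in 'Z(C) -> (g \in G :\: C) && (#|g ^: G| == 7).
    move=> x' Gx' Cx' Qx' Zd.
    have Cd := subsetP sZC _ Zd.
    have eg : g = x' * (x'^-1 * g) by rewrite mulKVg.
    have gG : g \in G by rewrite eg groupM // (subsetP sCG).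
    have gC : g \notin C.
      apply/negP=> Cg; case/negP: Cx'.
      have -> : x' = g * (x'^-1 * g)^-1 by rewrite invMg invgK mulgA mulgV mul1g.
      by rewrite groupM ?groupV.
    rewrite inE gC gG /=; apply/eqP; apply: (cls g gG gC).2.2.
    by rewrite eg; apply/(Qshift x' _ Gx' Qx' Cd).
  by case/orP; [apply: gen | apply: gen].
have cardX : #|X| = (2 * #|'Z(C)|)%N.
  have -> : X = x1 *: 'Z(C) :|: x2 *: 'Z(C).
    by apply/setP=> g; rewrite memX inE.
  rewrite cardsU !card_lcoset.
  have -> : x1 *: 'Z(C) :&: x2 *: 'Z(C) = set0.
    apply/setP=> g; rewrite !inE !mem_lcoset; apply/negP=> /andP [Z1 Z2].
    case/negP: x1C.
    have -> : x1 = (x1^-1 * g) * (x2^-1 * g)^-1.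
      by rewrite invMg invgK mulgA mulgK /x2 expg2 mulKg.
    by rewrite groupM ?groupV // (subsetP sZC).
  by rewrite cards0 subn0 mul2n addnn.
exists X; split=> //.
- by apply/subsetP=> g; rewrite inE => /andP[].
- by move=> g; rewrite inE => /andP[_ /eqP].
move=> g; rewrite !inE negb_or => /andP [/andP [gC nX] gG].
have [[g7|g21] _] := cls g gG gC; last by [].
by move: nX; rewrite /X ?inE gC gG g7 eqxx.
Qed.
Theorem lemma4p1 (gT : finGroupType) (G : {group gT}) :
  odd #|G| ->
  (* (1) *)
  ((cyclic (G^`(1)) /\ #|G^`(1)| = 15) -> G^`(1) \subset 'Z(G)) /\
  (* (2) *)
  ((cyclic (G^`(1)) /\ #|G^`(1)| = 21) -> ~~ (G^`(1) \subset 'Z(G)) ->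
    [/\ #|G / 'C_G(G^`(1))| = 3,
        #|G^`(1) :&: 'Z(G)| = 3 &
        let C := 'C_G(G^`(1)) in
        let P1 := forall x, x \in G :\: C -> #|x ^: G| = 21 in
        let P2 := exists X : {set gT},
            [/\ X \subset G :\: C,
                #|X| = (2 * #|'Z(C)|)%N,
                forall x, x \in X -> #|x ^: G| = 7 &
                forall x, x \in G :\: (C :|: X) -> #|x ^: G| = 21] in
        (P1 /\ ~ P2) \/ (~ P1 /\ P2)]).
Proof.
move=> oddG; split.
  by case=> cyc o15; apply: part1.
case=> cyc o21 nZ.
have commD : forall a b, a \in G -> b \in G -> [~ a, b] \in G^`(1).
  by move=> a b Ga Gb; rewrite derg1; apply: mem_commg.
exact: (part2 G (G^`(1))%G oddG (der_normal 1 G) commD cyc o21 nZ).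
Qed.
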